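(* Let $P\in\mathcal S^d$ be such that $\mathcal N_1(P)$ and $S_2:=\mathcal N_2(P)-\mathcal L_{12}(P)^\top\mathcal N_1(P)^{-1}\mathcal L_{12}(P)$ are invertible, and set $$K_2^*=\big(\mathcal L_{12}(P)^\top\mathcal N_1(P)^{-1}\mathcal L_{12}(P)-\mathcal N_2(P)\big)^{-1}\big(\mathcal L_2(P)^\top-\mathcal L_{12}(P)^\top\mathcal N_1(P)^{-1}\mathcal L_1(P)^\top\big).$$ Define $\mathcal M^{2*}(P)=\mathcal M(P)+\mathcal L_2(P)K_2^*+(\mathcal L_2(P)K_2^* )^\top+(K_2^* )^\top\mathcal N_2(P)K_2^*$, $\mathcal L^{2*}_1(P)=\mathcal L_1(P)+(\mathcal L_{12}(P)K_2^* )^\top$, $\mathcal N^{2*}_1(P)=\mathcal N_1(P)$. Then $P$ solves $0=\mathcal M^{2*}(P)-\mathcal L^{2*}_1(P)\mathcal N^{2*}_1(P)^{-1}\mathcal L^{2*}_1(P)^\top$ if and only if $P$ solves $0=\mathcal M(P)-\mathcal L(P)\mathcal N(P)^{-1}\mathcal L(P)^\top$.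
   Context: $\mathcal S^d$: symmetric $d\times d$ matrices. Fix $d,\ell\ge1$, $\gamma\in[0,1]$, $A\in\mathbb R^{d\times d}$, $B_1,B_2\in\mathbb R^{d\times\ell}$, $Q\in\mathcal S^d$, $R_1,R_2\in\mathcal S^\ell$. For $P\in\mathcal S^d$: $\mathcal M(P)=\gamma A^\top PA-P+Q$, $\mathcal L_i(P)=\gamma A^\top PB_i$ ($i=1,2$), $\mathcal L_{12}(P)=\gamma B_1^\top PB_2$, $\mathcal N_1(P)=\gamma B_1^\top PB_1+R_1$, $\mathcal N_2(P)=\gamma B_2^\top PB_2-R_2$, $\mathcal L(P)=[\mathcal L_1(P),\mathcal L_2(P)]\in\mathbb R^{d\times2\ell}$, $\mathcal N(P)=\begin{bmatrix}\mathcal N_1(P)&\mathcal L_{12}(P)\\\mathcal L_{12}(P)^\top&\mathcal N_2(P)\end{bmatrix}$ (which is invertible under the hypotheses). *)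

(* Defs.v *)
From mathcomp Require Import all_boot all_order all_algebra.
Set Implicit Arguments. Unset Strict Implicit. Unset Printing Implicit Defensive.
Import Order.TTheory GRing.Theory Num.Theory.
Local Open Scope ring_scope.

Section Ops.
Variables (R : realFieldType) (d l : nat) (gamma : R).
Variables (A : 'M[R]_d) (B1 B2 : 'M[R]_(d, l)) (Q : 'M[R]_d) (R1 R2 : 'M[R]_l).

Definition symmx n (X : 'M[R]_n) := X^T = X.

Definition Mop (P : 'M[R]_d) : 'M[R]_d := gamma *: (A^T *m P *m A) - P + Q.
Definition L1op (P : 'M[R]_d) : 'M[R]_(d, l) := gamma *: (A^T *m P *m B1).
Definition L2op (P : 'M[R]_d) : 'M[R]_(d, l) := gamma *: (A^T *m P *m B2).
Definition L12op (P : 'M[R]_d) : 'M[R]_l := gamma *: (B1^T *m P *m B2).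
Definition N1op (P : 'M[R]_d) : 'M[R]_l := gamma *: (B1^T *m P *m B1) + R1.
Definition N2op (P : 'M[R]_d) : 'M[R]_l := gamma *: (B2^T *m P *m B2) - R2.
Definition Lop (P : 'M[R]_d) : 'M[R]_(d, l + l) := row_mx (L1op P) (L2op P).
Definition Nop (P : 'M[R]_d) : 'M[R]_(l + l) :=
  block_mx (N1op P) (L12op P) (L12op P)^T (N2op P).

Definition S2op (P : 'M[R]_d) : 'M[R]_l :=
  N2op P - (L12op P)^T *m invmx (N1op P) *m L12op P.

Definition K2star (P : 'M[R]_d) : 'M[R]_(l, d) :=
  invmx ((L12op P)^T *m invmx (N1op P) *m L12op P - N2op P) *m
  ((L2op P)^T - (L12op P)^T *m invmx (N1op P) *m (L1op P)^T).

Definition M2star (P : 'M[R]_d) : 'M[R]_d :=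
  Mop P + L2op P *m K2star P + (L2op P *m K2star P)^T
  + (K2star P)^T *m N2op P *m K2star P.
Definition L1_2star (P : 'M[R]_d) : 'M[R]_(d, l) :=
  L1op P + (L12op P *m K2star P)^T.
Definition N1_2star (P : 'M[R]_d) : 'M[R]_l := N1op P.

End Ops.

(* Main.v *)
Require Import Defs.
From mathcomp Require Import all_boot all_order all_algebra.
Set Implicit Arguments. Unset Strict Implicit. Unset Printing Implicit Defensive.
Import Order.TTheory GRing.Theory Num.Theory.
Local Open Scope ring_scope.

Lemma zl (V : zmodType) (M a b c e f p1 p2 q : V) :
  p1 - b = - f -> p2 - c = -f -> q - e = f ->
  M + p1 + p2 + q - (a + b + (c + e)) = M - (a + f).
Proof.
move=> /eqP; rewrite subr_eq => /eqP ->.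
move=> /eqP; rewrite subr_eq => /eqP ->.
move=> /eqP; rewrite subr_eq => /eqP ->.
have h : (-f + c) + (f + e) = c + e by rewrite addrACA addNr add0r.
rewrite -[M + _ + _ + _]addrA h [a + b + _]addrC addrKA.
by rewrite addrA (addrC a) addrKA opprD addrA addrAC.
Qed.

Section Gen.
Variables (R : fieldType) (d l : nat).

Lemma inv_uniq n (A B : 'M[R]_n) : A *m B = 1%:M -> invmx A = B.
Proof.
move=> AB; have [Au _] := mulmx1_unit AB.
by rewrite -[invmx A]mulmx1 -AB mulmxA mulVmx // mul1mx.
Qed.

Lemma invmxN n (A : 'M[R]_n) : A \in unitmx -> invmx (- A) = - invmx A.
Proof. by move=> Au; apply: inv_uniq; rewrite mulNmx mulmxN opprK mulmxV. Qed.

Variables (N1 C N2 : 'M[R]_l) (L1 L2 : 'M[R]_(d, l)) (M : 'M[R]_d).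
Hypotheses (sN1 : N1^T = N1) (sN2 : N2^T = N2) (uN1 : N1 \in unitmx)
  (uS : N2 - C^T *m invmx N1 *m C \in unitmx).

Let iN1 := invmx N1.
Let S := N2 - C^T *m iN1 *m C.
Let iS := invmx S.

Lemma blk_inv : invmx (block_mx N1 C C^T N2) =
  block_mx (iN1 + iN1 *m C *m iS *m C^T *m iN1) (- (iN1 *m C *m iS))
           (- (iS *m C^T *m iN1)) iS.
Proof.
apply: inv_uniq; rewrite mulmx_block scalar_mx_block; congr block_mx.
- by rewrite mulmxDr mulmxN !mulmxA mulmxV // mul1mx addrK.
- by rewrite mulmxN !mulmxA mulmxV // mul1mx addNr.
- have key : S *m (iS *m C^T *m iN1) = C^T *m iN1.
    by rewrite !mulmxA mulmxV // mul1mx.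
  move: key; rewrite /S mulmxBl mulmxDr mulmxN !mulmxA.
  move: (C^T *m iN1 *m C *m iS *m C^T *m iN1) => b.
  move: (N2 *m iS *m C^T *m iN1) => c.
  by move=> <-; rewrite subrK subrr.
- by rewrite mulmxN !mulmxA addrC -mulmxBl mulmxV.
Qed.

Let iN1t : iN1^T = iN1. Proof. by rewrite /iN1 trmx_inv sN1. Qed.
Let u := L1 *m iN1 *m C.
Let Z := u - L2.
Let Zt : Z^T = C^T *m iN1 *m L1^T - L2^T.
Proof. by rewrite /Z /u linearB /= !trmx_mul iN1t mulmxA. Qed.
Let St : S^T = S.
Proof. by rewrite /S linearB /= !trmx_mul iN1t trmxK sN2 mulmxA. Qed.
Let iSt : iS^T = iS.
Proof. by rewrite /iS trmx_inv St. Qed.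

Lemma side2 : row_mx L1 L2 *m invmx (block_mx N1 C C^T N2) *m (row_mx L1 L2)^T
  = L1 *m iN1 *m L1^T + Z *m iS *m Z^T.
Proof.
rewrite blk_inv tr_row_mx mul_row_block mul_row_col.
have -> : L1 *m (iN1 + iN1 *m C *m iS *m C^T *m iN1) + L2 *m - (iS *m C^T *m iN1)
   = L1 *m iN1 + Z *m iS *m C^T *m iN1.
  by rewrite mulmxDr !mulmxN !mulmxA -addrA /Z !mulmxBl.
have -> : L1 *m - (iN1 *m C *m iS) + L2 *m iS = - (Z *m iS).
  by rewrite /Z mulmxBl opprB mulmxN !mulmxA addrC.
by rewrite mulmxDl mulNmx -addrA Zt mulmxBr !mulmxA.
Qed.

Let K := invmx (C^T *m iN1 *m C - N2) *m (L2^T - C^T *m iN1 *m L1^T).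
Let eK : K = iS *m Z^T.
Proof.
rewrite /K -opprB invmxN // mulNmx -mulmxN opprB Zt //.
Qed.
Let eKt : K^T = Z *m iS.
Proof. by rewrite eK trmx_mul trmxK iSt. Qed.



Lemma side1 (z : 'M[R]_(d, l)) (k : 'M[R]_(l, d)) :
  z = L1 *m iN1 *m C - L2 -> z^T = C^T *m iN1 *m L1^T - L2^T ->
  k = iS *m z^T -> k^T = z *m iS ->
  M + L2 *m k + (L2 *m k)^T + k^T *m N2 *m k
  - (L1 + (C *m k)^T) *m iN1 *m (L1 + (C *m k)^T)^T
  = M - (L1 *m iN1 *m L1^T + z *m iS *m z^T).
Proof.
move=> hz hzt hk hkt.
rewrite linearD /= !trmx_mul !trmxK.
rewrite !mulmxDl !mulmxDr !mulmxA.
have f1 : L2 *m k - L1 *m iN1 *m C *m k = -(z *m iS *m z^T).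
  by rewrite -mulmxBl -opprB -hz mulNmx hk mulmxA.
have f2 : k^T *m L2^T - k^T *m C^T *m iN1 *m L1^T = -(z *m iS *m z^T).
  by rewrite hkt hzt mulmxBr opprB !mulmxA.
have f3 : k^T *m N2 *m k - k^T *m C^T *m iN1 *m C *m k = z *m iS *m z^T.
  have -> : k^T *m N2 *m k - k^T *m C^T *m iN1 *m C *m k = k^T *m S *m k.
    by rewrite /S mulmxBr mulmxBl !mulmxA.
  by rewrite hkt hk mulmxKV // mulmxA.
move: f1 f2 f3.
move: (k^T *m C^T *m iN1 *m C *m k) => e.
move: (k^T *m C^T *m iN1 *m L1^T) => c.
move: (L1 *m iN1 *m C *m k) => b.
move: (z *m iS *m z^T) => f.
move: (L1 *m iN1 *m L1^T) => a.
move: (L2 *m k) (k^T *m L2^T) (k^T *m N2 *m k) => p1 p2 q.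
by move=> f1 f2 f3; apply: zl.
Qed.
Lemma key : let K := invmx (C^T *m invmx N1 *m C - N2) *m (L2^T - C^T *m invmx N1 *m L1^T) in
  M + L2 *m K + (L2 *m K)^T + K^T *m N2 *m K
  - (L1 + (C *m K)^T) *m invmx N1 *m (L1 + (C *m K)^T)^T
  = M - row_mx L1 L2 *m invmx (block_mx N1 C C^T N2) *m (row_mx L1 L2)^T.
Proof.
move=> K'; rewrite side2; apply: side1.
- by [].
- exact: Zt.
- exact: eK.
- exact: eKt.
Qed.
End Gen.

Theorem mainTheorem10 (R : realFieldType) (d l : nat) (gamma : R)
  (A : 'M[R]_d) (B1 B2 : 'M[R]_(d, l)) (Q : 'M[R]_d) (R1 R2 : 'M[R]_l)
  (P : 'M[R]_d) :
  (0 < d)%N -> (0 < l)%N -> 0 <= gamma <= 1 ->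
  symmx Q -> symmx R1 -> symmx R2 -> symmx P ->
  N1op gamma B1 R1 P \in unitmx ->
  S2op gamma B1 B2 R1 R2 P \in unitmx ->
  (M2star gamma A B1 B2 Q R1 R2 P
     - L1_2star gamma A B1 B2 R1 R2 P *m invmx (N1_2star gamma B1 R1 P)
         *m (L1_2star gamma A B1 B2 R1 R2 P)^T = 0
   <->
   Mop gamma A Q P
     - Lop gamma A B1 B2 P *m invmx (Nop gamma B1 B2 R1 R2 P)
         *m (Lop gamma A B1 B2 P)^T = 0).
Proof.
move=> _ _ _ sQ sR1 sR2 sP uN1 uS.
have sN1 : (N1op gamma B1 R1 P)^T = N1op gamma B1 R1 P.
  by rewrite /N1op linearD linearZ /= !trmx_mul trmxK sP sR1 mulmxA.
have sN2 : (N2op gamma B2 R2 P)^T = N2op gamma B2 R2 P.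
  by rewrite /N2op linearB linearZ /= !trmx_mul trmxK sP sR2 mulmxA.
have := key (L1op gamma A B1 P) (L2op gamma A B2 P) (Mop gamma A Q P) sN1 sN2 uN1 uS.
rewrite /M2star /L1_2star /N1_2star /K2star /Lop /Nop /= => ->.
by [].
Qed.
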